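(* In the manifold decomposition game, the Grundy value of the position consisting of the single surface $og$ is $G(o0)=0$, $G(o1)=1$, and for $g\ge 2$, $G(og)=2$ if $g$ is even and $G(og)=0$ if $g$ is odd. (In the paper's notation, the $G$-series of $og$ is $01\dot{2}\dot{0}$.)
   Context: Notation: $og$ is the closed orientable surface of genus $g$ (connected sum of $g$ tori), with $o0$ the sphere. The manifold decomposition game: a position is a finite disjoint union of compact connected surfaces without boundary. Two players alternate moves. A move consists of choosing one component $S$ and performing a proper decomposition of it: choose an essential simple closed curve $J$ on $S$ (not null-homotopic, equivalently not bounding a disk in $S$), take a tubular neighborhood of $J$ (an annulus or a Möbius band), remove its interior, and cap off each resulting boundary circle with a disk; $S$ is replaced by the resulting one or two surfaces. The game ends when every component is a sphere, and the last player able to move wins. The Grundy value $G$ of a position is defined recursively: a position with no moves has value $0$, and otherwise the value is the minimal excluded nonnegative integer (mex) of the values of positions reachable in one move. The $G$-series lists $G(o0),G(o1),G(o2),\dots$; dots over digits indicate a repeating block. *)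

(* Defs.v *)
From mathcomp Require Import all_boot.
Set Implicit Arguments. Unset Strict Implicit. Unset Printing Implicit Defensive.

(* A closed orientable surface o_g is represented by its genus g; a position
   (finite disjoint union of such surfaces) by the list of genera of its
   components (order irrelevant). *)
Definition position := seq nat.

(* Results of a proper decomposition of o_g along an essential simple closed
   curve J:
   - J non-separating (exists iff g >= 1): result o_(g-1);
   - J separating and essential (exists iff g >= 2): result o_a + o_(g-a),
     with 1 <= a <= g-1 (every such split is realised).
   The sphere o_0 has no essential curve. *)
Definition pieces (g : nat) : seq position :=
  if g is g'.+1 then [:: g'] :: [seq [:: a; g - a] | a <- iota 1 g'] else [::].

Definition moves (p : position) : seq position :=
  flatten [seq [seq take i p ++ r ++ drop i.+1 p | r <- pieces (nth 0 p i)]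
          | i <- iota 0 (size p)].

Definition mex (s : seq nat) : nat :=
  find (fun n => n \notin s) (iota 0 (size s).+1).

Fixpoint grundy_fuel (fuel : nat) (p : position) : nat :=
  if fuel is f.+1 then mex [seq grundy_fuel f q | q <- moves p] else 0.

(* Strictly decreasing measure along moves: sum of (2g-1) over components of
   positive genus; so fuel (measure p).+1 is enough for the full recursion. *)
Definition measure (p : position) : nat := sumn [seq (g.*2).-1 | g <- p].

Definition grundy (p : position) : nat := grundy_fuel (measure p).+1 p.

(* Main.v *)
Require Import Defs.
From mathcomp Require Import all_boot.
From mathcomp Require Import zify.
Set Implicit Arguments. Unset Strict Implicit.

Lemma mexE s n : n \notin s -> (forall m, m < n -> m \in s) -> mex s = n.
Proof.
move=> hn hs.
have hsz : n <= size s.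
  have := @uniq_leq_size _ (iota 0 n) s (iota_uniq 0 n).
  rewrite size_iota; apply=> m; rewrite mem_iota => /andP[_ ]; exact: hs.
rewrite /mex -(subnKC (ltnW (leq_ltn_trans hsz (ltnSn (size s))))).
rewrite iotaD find_cat.
have -> : has (fun n0 => n0 \notin s) (iota 0 n) = false.
  apply/hasP=> -[m]; rewrite mem_iota => /andP[_ hm]; rewrite hs //.
rewrite size_iota add0n.
case E: ((size s).+1 - n) => [|k]; first by lia.
by rewrite /= hn addn0.
Qed.

Definition a1 : pred nat := pred1 1.
Definition a2 : pred nat := fun g => (1 < g) && ~~ odd g.
Definition c1 (p : position) := odd (count a1 p).
Definition c2 (p : position) := odd (count a2 p).
Definition F (p : position) : nat := c1 p + 2 * c2 p.
Definition d1 g (r : position) := a1 g (+) c1 r.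
Definition d2 g (r : position) := a2 g (+) c2 r.

Lemma split_at (p : position) i : i < size p ->
  p = take i p ++ nth 0 p i :: drop i.+1 p.
Proof. by move=> hi; rewrite -drop_nth // cat_take_drop. Qed.

Lemma odd_count_repl (a : pred nat) p i r : i < size p ->
  odd (count a (take i p ++ r ++ drop i.+1 p)) =
  odd (count a p) (+) a (nth 0 p i) (+) odd (count a r).
Proof.
move=> hi; have E := split_at hi; move: E; set g := nth 0 p i => E.
rewrite [in count a p]E !count_cat /= !oddD.
case: (a g) => /=;
by case: (odd (count a (take i p))); case: (odd (count a r));
   case: (odd (count a (drop i.+1 p))).
Qed.

Lemma F_repl p i r : i < size p ->
  F (take i p ++ r ++ drop i.+1 p) =
  (c1 p (+) d1 (nth 0 p i) r) + 2 * (c2 p (+) d2 (nth 0 p i) r).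
Proof.
move=> hi; rewrite /F /c1 /c2 /d1 /d2 !odd_count_repl //.
by rewrite /c1 /c2 !addbA.
Qed.

Lemma measure_repl p i r : i < size p ->
  measure (take i p ++ r ++ drop i.+1 p) + (nth 0 p i).*2.-1 =
  measure p + measure r.
Proof.
move=> hi; have E := split_at hi; move: E; set g := nth 0 p i => E.
rewrite /measure [in sumn (map _ p)]E !map_cat !sumn_cat /=; lia.
Qed.

Lemma piecesP g r : r \in pieces g ->
  exists g', g = g'.+1 /\ (r = [:: g'] \/ exists a, [/\ 1 <= a <= g' & r = [:: a; g - a]]).
Proof.
case: g => [|g'] //= ; rewrite in_cons => /orP[/eqP->|/mapP[a ha ->]].
  by exists g'; split=> //; left.
exists g'; split=> //; right; exists a; split=> //.
by move: ha; rewrite mem_iota; lia.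
Qed.

Lemma pieces_measure g r : r \in pieces g -> measure r < g.*2.-1.
Proof.
case/piecesP=> g' [-> [->|[a [ha ->]]]]; rewrite /measure /=; lia.
Qed.

Lemma pieces_nonzero g r : r \in pieces g -> d1 g r || d2 g r.
Proof.
case/piecesP=> g' [-> [->|[a [ha ->]]]].
  rewrite /d1 /d2 /c1 /c2 /a1 /a2 /=.
  case: g' => [|[|g'']] //=; rewrite !addn0.
  by case: (odd g'').
rewrite /d1 /d2 /c1 /c2 /a1 /a2 /=.
have [b hb] : exists b, g'.+1 - a = b by eexists.
have hg : g' = (a + b).-1 by lia.
have ha1 : 1 <= a by case/andP: ha.
have hb1 : 1 <= b by lia.
rewrite hb hg; clear hb hg ha.
case: a ha1 => [|x] // _; case: b hb1 => [|y] // _.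
rewrite !addnS !addSn /= !addn0 !oddD.
case: x => [|x]; case: y => [|y] //=; rewrite ?addnS ?addn0 /= ?oddD;
  by case: (odd x); case: (odd y).
Qed.

Lemma movesP p q : q \in moves p ->
  exists i r, [/\ i < size p, r \in pieces (nth 0 p i) & q = take i p ++ r ++ drop i.+1 p].
Proof.
case/flattenP=> s /mapP[i hi ->] /mapP[r hr ->].
by exists i, r; split=> //; move: hi; rewrite mem_iota.
Qed.

Lemma moves_in p i r : i < size p -> r \in pieces (nth 0 p i) ->
  F (take i p ++ r ++ drop i.+1 p) \in [seq F q | q <- moves p].
Proof.
move=> hi hr; apply: map_f; apply/flattenP.
exists [seq take i p ++ r0 ++ drop i.+1 p | r0 <- pieces (nth 0 p i)].
  by apply: map_f; rewrite mem_iota.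
exact: map_f.
Qed.

Lemma comp (a : pred nat) p : odd (count a p) -> exists2 i, i < size p & a (nth 0 p i).
Proof.
move=> h; have : has a p by rewrite has_count; case: (count a p) h.
case/hasP=> x hx hax; exists (index x p); first by rewrite index_mem.
by rewrite nth_index.
Qed.

Lemma even_pieces g : a2 g -> exists r2 r3,
  [/\ r2 \in pieces g, d1 g r2 = false & d2 g r2 = true] /\
  [/\ r3 \in pieces g, d1 g r3 = true & d2 g r3 = true].
Proof.
case: g => [|[|[|[|g]]]] //.
  by move=> _; exists [:: 1; 1], [:: 1].
rewrite /a2 /= negbK => hg.
exists [:: g.+3], [:: 1; g.+3].
rewrite /d1 /d2 /c1 /c2 /a1 /a2 /= hg /=; split; split=> //.
  by rewrite in_cons eqxx.
rewrite in_cons; apply/orP; right.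
have -> : [:: 1; g.+3] = [:: 1; g.+4 - 1] by rewrite subn1.
by rewrite in_cons eqxx.
Qed.

Lemma grundy_fuelE f p : measure p < f -> grundy_fuel f p = F p.
Proof.
elim: f p => [|f IH] p //= hp.
have -> : [seq grundy_fuel f q | q <- moves p] = [seq F q | q <- moves p].
  apply/eq_in_map => q /movesP[i [r [hi hr ->]]]; apply: IH.
  have := measure_repl r hi; have := pieces_measure hr; move=> h1 h2; apply: (@leq_trans (measure p)); last by []; rewrite -(ltn_add2r ((nth 0 p i).*2.-1)) h2 ltn_add2l; exact h1.
apply: mexE.
  apply/mapP=> -[q /movesP[i [r [hi hr ->]]]]; rewrite F_repl // /F.
  have := pieces_nonzero hr.
  by case: (d1 _ _); case: (d2 _ _); case: (c1 p); case: (c2 p).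
move=> m; rewrite /F.
case h1: (c1 p); case h2: (c2 p) => /= hm.
- have [j hj ej] := comp h1.
  have [i hi ei] := comp h2.
  have [r2 [r3 [[hr2 e21 e22] [hr3 e31 e32]]]] := even_pieces ei.
  have hr1 : [:: 0] \in pieces (nth 0 p j) by move: ej; rewrite /a1 /= => /eqP ->.
  have e11 : d1 (nth 0 p j) [:: 0] = true by move: ej; rewrite /a1 /= => /eqP ->.
  have e12 : d2 (nth 0 p j) [:: 0] = false by move: ej; rewrite /a1 /= => /eqP ->.
  case: m hm => [|[|[|]]] // _.
  + by have := moves_in hi hr3; rewrite F_repl // h1 h2 e31 e32.
  + by have := moves_in hi hr2; rewrite F_repl // h1 h2 e21 e22.
  + by have := moves_in hj hr1; rewrite F_repl // h1 h2 e11 e12.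
- have [j hj ej] := comp h1.
  have hr1 : [:: 0] \in pieces (nth 0 p j) by move: ej; rewrite /a1 /= => /eqP ->.
  have e11 : d1 (nth 0 p j) [:: 0] = true by move: ej; rewrite /a1 /= => /eqP ->.
  have e12 : d2 (nth 0 p j) [:: 0] = false by move: ej; rewrite /a1 /= => /eqP ->.
  case: m hm => [|] // _.
  by have := moves_in hj hr1; rewrite F_repl // h1 h2 e11 e12.
- have [i hi ei] := comp h2.
  have [r2 [r3 [[hr2 e21 e22] [hr3 e31 e32]]]] := even_pieces ei.
  case: m hm => [|[|]] // _.
  + by have := moves_in hi hr2; rewrite F_repl // h1 h2 e21 e22.
  + by have := moves_in hi hr3; rewrite F_repl // h1 h2 e31 e32.
- by [].
Qed.

Theorem theorem2p3 (g : nat) :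
  grundy [:: g] =
    if g == 0 then 0
    else if g == 1 then 1
    else if odd g then 0 else 2.
Proof.
rewrite /grundy grundy_fuelE // /F /c1 /c2 /a1 /a2 /=.
case: g => [|[|g]] //=; rewrite !addn0.
by case: (odd g).
Qed.
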